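(* Let $\|\cdot\|$ be a norm on $\mathbb{R}^d$. For each integer $m>2$ let $E_m=\{T\subseteq\mathbb{R}^d\mid |T|=m \text{ and } T \text{ contains two points } x,y \text{ with } \|x-y\|=1\}$ and $\mathcal{G}_m=(\mathbb{R}^d,E_m)$. Then $\chi(\mathcal{G}_m)=\chi((\mathbb{R}^d,\|\cdot\|),1)$ for all such $m$.
   Context: $\chi((\mathbb{R}^d,\|\cdot\|),1)$ denotes the chromatic number of the unit distance graph of $(\mathbb{R}^d,\|\cdot\|)$, i.e. the graph on $\mathbb{R}^d$ whose edges are the pairs $\{x,y\}$ with $\|x-y\|=1$. A hypergraph $(V,E)$ has edges that are subsets of $V$ of size at least $2$; a proper coloring makes no edge monochromatic; $\chi$ is the least number of colors of a proper coloring. *)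

(* Defs.v *)
From HB Require Import structures.
From mathcomp Require Import all_boot all_order all_algebra.
From mathcomp Require Import boolp classical_sets reals.
Set Implicit Arguments. Unset Strict Implicit. Unset Printing Implicit Defensive.
Import Order.TTheory GRing.Theory Num.Theory.
Local Open Scope ring_scope.

Definition is_norm (R : realType) (d : nat) (N : 'rV[R]_d -> R) : Prop :=
  [/\ (forall x, N x = 0 -> x = 0),
      (forall (a : R) x, N (a *: x) = `|a| * N x) &
      (forall x y, N (x + y) <= N x + N y)].

Definition hproper_coloring (V : Type) (E : set (set V)) (k : nat)
  (c : V -> 'I_k) : Prop :=
  forall e, E e -> exists x y, e x /\ e y /\ c x <> c y.

Definition hcolorable (V : Type) (E : set (set V)) (k : nat) : Prop :=
  exists c : V -> 'I_k, hproper_coloring E c.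

Definition hchromatic_number (V : Type) (E : set (set V)) (n : nat) : Prop :=
  hcolorable E n /\ forall k, (k < n)%N -> ~ hcolorable E k.

Definition has_card (V : eqType) (T : set V) (m : nat) : Prop :=
  exists s : seq V, [/\ uniq s, size s = m & forall x, T x <-> x \in s].

Definition Em (R : realType) (d : nat) (N : 'rV[R]_d -> R) (m : nat)
  : set (set 'rV[R]_d) :=
  [set T | has_card T m /\ exists x y, [/\ T x, T y & N (x - y) = 1]].

Definition unit_coloring (R : realType) (d : nat) (N : 'rV[R]_d -> R)
  (k : nat) (c : 'rV[R]_d -> 'I_k) : Prop :=
  forall x y, N (x - y) = 1 -> c x <> c y.

Definition unit_colorable (R : realType) (d : nat) (N : 'rV[R]_d -> R)
  (k : nat) : Prop := exists c, unit_coloring N (k:=k) c.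

Definition unit_chromatic_number (R : realType) (d : nat)
  (N : 'rV[R]_d -> R) (n : nat) : Prop :=
  unit_colorable N n /\ forall k, (k < n)%N -> ~ unit_colorable N k.

(* Main.v *)
Require Import Defs.
From HB Require Import structures.
From mathcomp Require Import all_boot all_order all_algebra.
From mathcomp Require Import boolp classical_sets reals.
From mathcomp Require Import filter.
Import Order.TTheory GRing.Theory Num.Theory.
Local Open Scope classical_set_scope.
Local Open Scope ring_scope.

Lemma ultra_fin (U : set_system nat) (UU : UltraFilter U) k (f : nat -> 'I_k) :
  exists i, U [set j | f j = i].
Proof.
suff H : forall s : seq 'I_k, (exists i, U [set j | f j = i]) \/
   U [set j | f j \notin s].
  case: (H (enum 'I_k)) => // HU; exfalso.
  apply: (@filter_not_empty _ U _).
  apply: filterS HU => j /=; by rewrite mem_enum.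
elim=> [|a s IH].
  right; apply: filterS (@filterT _ U _) => j _ /=; done.
case: IH => [HH|H]; first by left.
case: (in_ultra_setVsetC [set j | f j = a] UU) => Ha; first by left; exists a.
right; apply: filterS (filterI Ha H) => j [/= Hj1 Hj2].
by rewrite in_cons negb_or Hj2 andbT; apply/eqP.
Qed.

Lemma extend_seq (V : eqType) (S : set V) :
  (forall s : seq V, exists z, S z /\ z \notin s) ->
  forall k (s : seq V), uniq s -> (forall z, z \in s -> S z) ->
  exists s', [/\ uniq s', size s' = (size s + k)%N, {subset s <= s'} &
                 forall z, z \in s' -> S z].
Proof.
move=> inf; elim=> [|k IH] s us Ss.
  by exists s; rewrite addn0; split.
have [s1 [u1 sz1 sub1 S1]] := IH s us Ss.
have [z [Sz zn]] := inf s1.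
exists (z :: s1); split => /=.
- by rewrite zn u1.
- by rewrite sz1 addnS.
- by move=> w ws; rewrite in_cons (sub1 _ ws) orbT.
- by move=> w; rewrite in_cons => /orP [/eqP ->|]; [|apply: S1].
Qed.

Lemma evP (P : set nat) : (exists N, forall n, (N <= n)%N -> P n) -> \oo P.
Proof. by move=> [N HN]; exists N => // n /= Hn; apply: HN. Qed.

Lemma hcol_unit (R : realType) (d : nat) (N : 'rV[R]_d -> R)
  (hN : is_norm N) (m : nat) (hm : (2 < m)%N) k :
  hcolorable (Em N m) k -> unit_colorable N k.
Proof.
move: hN => [N0 NZ _] [c hc].
have N00 : N 0 = 0 by have := NZ 0 0; rewrite scale0r normr0 mul0r.
case: (pselect (exists x y, N (x - y) = 1)) => [[x0 [y0 H01]] | Hno]; last first.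
  by exists c => x y H; exfalso; apply: Hno; exists x, y.
set v := x0 - y0.
have v0 : v != 0.
  by apply/eqP => E; move: H01; rewrite -/v E N00 => /eqP; rewrite eq_sym oner_eq0.
pose t : nat -> 'rV[R]_d := fun j : nat => j%:R *: v.
have tinj : forall (x : 'rV[R]_d) i j, x + t i = x + t j -> i = j.
  move=> x i j /addrI /eqP; rewrite /t -subr_eq0 -scalerBl scaler_eq0 (negbTE v0) orbF.
  by rewrite subr_eq0 eqr_nat => /eqP.
have [U [UU sU]] := ultraFilterLemma eventually_filter.
have PU : ProperFilter U by case: UU.
have FU : Filter U by case: PU.
have hex (x : 'rV[R]_d) : exists i, U [set j | c (x + t j) = i] := @ultra_fin U UU _ (fun j => c (x + t j)).
exists (fun x => proj1_sig (cid (hex x))).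
move=> x y Hxy; case: cid => i Hi; case: cid => i' Hi' /= Eii'.
subst i'.
have UJ : U ([set j | c (x + t j) = i] `&` [set j | c (y + t j) = i]) by apply: filterI.
have [j1 [/= Hj1x Hj1y]] := filter_ex UJ.
have inf : forall s : seq 'rV[R]_d, exists z, c z = i /\ z \notin s.
  move=> s.
  have Us : U [set j | x + t j \notin s].
    apply: sU; apply: evP; elim: s => [|a s [N1 HN1]].
      by exists 0%N.
    case: (pselect (exists j, x + t j = a)) => [[j Hj]|Hnj].
      exists (maxn N1 j.+1) => n; rewrite geq_max => /andP [h1 h2].
      rewrite /= in_cons negb_or HN1 // andbT; apply/eqP => E.
      by move: h2; rewrite (tinj _ _ _ (etrans E (esym Hj))) ltnn.
    exists N1 => n h1; rewrite /= in_cons negb_or HN1 // andbT; apply/eqP => E.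
    by apply: Hnj; exists n.
  have [j [/= Hj1 Hj2]] := filter_ex (filterI Hi Us).
  by exists (x + t j).
set x1 := x + t j1; set y1 := y + t j1.
have Hxy1 : N (x1 - y1) = 1.
  by rewrite /x1 /y1 opprD addrACA subrr addr0.
have nxy : x1 != y1.
  by apply/eqP => E; move: Hxy1; rewrite E subrr N00 => /eqP; rewrite eq_sym oner_eq0.
have us : uniq ([:: x1; y1] : seq 'rV[R]_d) by rewrite /= andbT in_cons negb_or nxy.
have Ss : forall z : 'rV[R]_d, z \in ([:: x1; y1] : seq 'rV[R]_d) -> [set z | c z = i] z.
  by move=> z; rewrite !in_cons in_nil orbF => /orP [] /eqP ->.
have [s' [u' sz' sub' S']] := @extend_seq _ [set z | c z = i] inf (m - 2) _ us Ss.
have ET : Em N m [set z | z \in s'].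
  split.
    exists s'; split => //.
    by rewrite sz' /= subnKC // ltnW.
  exists x1, y1; split => //=.
    by apply: sub'; rewrite mem_head.
  by apply: sub'; rewrite in_cons mem_head orbT.
have [a [b [Ta [Tb Hab]]]] := hc _ ET.
by apply: Hab; rewrite (S' _ Ta) (S' _ Tb).
Qed.

Lemma unit_hcol (R : realType) (d : nat) (N : 'rV[R]_d -> R) (m : nat) k :
  unit_colorable N k -> hcolorable (Em N m) k.
Proof.
move=> [c hc]; exists c => e [_ [x [y [ex ey Hxy]]]].
by exists x, y; split; [|split; [|apply: hc]].
Qed.

Theorem corollary4p4p1 (R : realType) (d : nat) (N : 'rV[R]_d -> R)
  (hN : is_norm N) (m : nat) (hm : (2 < m)%N) (n : nat) :
  hchromatic_number (Em N m) n <-> unit_chromatic_number N n.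
Proof.
have E k : hcolorable (Em N m) k <-> unit_colorable N k.
  by split; [apply: hcol_unit|apply: unit_hcol].
split=> [[H1 H2]|[H1 H2]]; split.
- by apply/E.
- by move=> k hk /E; apply: H2.
- by apply/E.
- by move=> k hk /E; apply: H2.
Qed.
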